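(* Let $V$ be a finite-dimensional vector space over an algebraically closed field of characteristic zero and $d\ge 2$. Suppose $[F] \in \mathbb{P}(S^d V)$ is a form of maximal Waring rank (among all forms of degree $d$ on $V$). Then $F$ is concise. In particular, a general point in each irreducible component of $W_m$ is a concise form.
   Context: The Waring rank of $F\in S^dV$ is the least $r$ such that $F$ is a sum of $r$ $d$-th powers of linear forms; $m$ denotes the maximal Waring rank for forms of degree $d$ on $V$, and $W_m$ is the Zariski closure of the set of classes of forms of rank exactly $m$. $F$ is concise if there is no proper subspace $V'\subsetneq V$ with $F\in S^dV'$. *)

(* Defs.v *)
From HB Require Import structures.
From mathcomp Require Import all_boot all_order all_algebra.
From mathcomp Require Import multinomials.mpoly.
Set Implicit Arguments. Unset Strict Implicit. Unset Printing Implicit Defensive.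
Import GRing.Theory.
Local Open Scope ring_scope.

(* V = k^n, with the variables 'X_0, ..., 'X_(n-1) a basis of V, so that
   S^d V is the space of homogeneous polynomials of degree d in
   {mpoly k[n]}. *)
Definition linform (k : fieldType) (n : nat) (v : 'rV[k]_n) : {mpoly k[n]} :=
  \sum_(i < n) v 0 i *: 'X_i.

Definition waring_decomp (k : fieldType) (n d : nat) (F : {mpoly k[n]}) (r : nat) : Prop :=
  exists L : 'M[k]_(r, n), F = \sum_(j < r) (linform (row j L)) ^+ d.

Definition is_waring_rank (k : fieldType) (n d : nat) (F : {mpoly k[n]}) (r : nat) : Prop :=
  waring_decomp d F r /\ forall r', waring_decomp d F r' -> (r <= r')%N.

(* F (of degree d) lies in S^d V' where V' is the row space of A,
   i.e. F is a homogeneous degree-d polynomial in the linear forms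
   spanning V'. *)
Definition in_Sd_sub (k : fieldType) (n d r : nat) (F : {mpoly k[n]}) (A : 'M[k]_(r, n)) : Prop :=
  exists P : {mpoly k[r]}, P \is d.-homog /\
    F = P \mPo [tuple linform (row j A) | j < r].

Definition concise (k : fieldType) (n d : nat) (F : {mpoly k[n]}) : Prop :=
  forall (r : nat) (A : 'M[k]_(r, n)), (\rank A < n)%N -> ~ in_Sd_sub d F A.

(* Main.v *)
Require Import Defs.
From HB Require Import structures.
From mathcomp Require Import all_boot all_order all_algebra.
From mathcomp Require Import multinomials.mpoly.
From Stdlib Require Import Classical.
Set Implicit Arguments. Unset Strict Implicit. Unset Printing Implicit Defensive.
Import GRing.Theory.
Local Open Scope ring_scope.

Section Helpers.
Variables (k : fieldType) (n : nat).

Lemma linform_homog (v : 'rV[k]_n) : linform v \is 1.-homog.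
Proof.
rewrite /linform; apply: rpred_sum => i _; apply: rpredZ.
by rewrite dhomogX; apply/eqP; apply: mdeg1.
Qed.

Lemma linform_homogX (v : 'rV[k]_n) d : linform v ^+ d \is d.-homog.
Proof. by have := dhomogMn d (linform_homog v); rewrite mul1n. Qed.

Lemma linformD (v w : 'rV[k]_n) : linform (v + w) = linform v + linform w.
Proof. by rewrite /linform -big_split; apply: eq_bigr => i _; rewrite mxE scalerDl. Qed.

Lemma linformZ (c : k) (v : 'rV[k]_n) : linform (c *: v) = c *: linform v.
Proof. by rewrite /linform scaler_sumr; apply: eq_bigr => i _; rewrite mxE scalerA. Qed.

Lemma linform0 : linform (0 : 'rV[k]_n) = 0.
Proof. by rewrite /linform big1 // => i _; rewrite mxE scale0r. Qed.

Definition subst (M : 'M[k]_n) : n.-tuple {mpoly k[n]} := [tuple linform (row i M) | i < n].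

Lemma linform_subst (v : 'rV[k]_n) M : linform v \mPo subst M = linform (v *m M).
Proof.
rewrite (mulmx_sum_row v M). rewrite {1}/linform raddf_sum /=.
rewrite (big_morph (@linform k n) linformD linform0).
apply: eq_bigr => i _; rewrite linformZ comp_mpolyZ comp_mpolyXU.
by rewrite -tnth_nth tnth_mktuple.
Qed.

Lemma comp_comp r (P : {mpoly k[r]}) (t : r.-tuple {mpoly k[n]}) (t' : n.-tuple {mpoly k[n]}) :
  (P \mPo t) \mPo t' = P \mPo [tuple (tnth t i \mPo t') | i < r].
Proof.
rewrite (comp_mpolyE P t) (comp_mpolyE P) raddf_sum /=; apply: eq_bigr => m _.
rewrite linearZ /= rmorph_prod /=; congr (_ *: _); apply: eq_bigr => i _.
by rewrite rmorphXn tnth_mktuple.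
Qed.

End Helpers.

Section Main.
Variables (k : fieldType) (n : nat) (u e : 'rV[k]_n).
Hypothesis he : (e *m u^T) 0 0 = 1.

Definition Tm (w : 'rV[k]_n) : 'M[k]_n := 1%:M + u^T *m (w - e).

Lemma mulT v w : v *m Tm w = v + (v *m u^T) 0 0 *: (w - e).
Proof. rewrite /Tm mulmxDr mulmx1 mulmxA. by rewrite {1}[v *m u^T]mx11_scalar mul_scalar_mx. Qed.

Lemma mulTe w : e *m Tm w = w.
Proof. by rewrite mulT he scale1r addrC subrK. Qed.

Variables (d : nat) (F : {mpoly k[n]}).
Hypothesis hFfix : forall w, F \mPo subst (Tm w) = F.

Lemma reduce0 (hd : (0 < d)%N) (L : 'M[k]_(0, n)) :
  F + linform e ^+ d = \sum_(j < 0) linform (row j L) ^+ d -> F = 0.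
Proof.
move=> hG; have := congr1 (comp_mpoly (subst (Tm 0))) hG.
have hd0 : (d == 0%N) = false by case: (d) hd.
by rewrite rmorphD rmorphXn /= hFfix linform_subst mulTe linform0 expr0n hd0 addr0 big_ord0 raddf0.
Qed.

Lemma reduce (hroot : forall c : k, exists om, om ^+ d = 1 /\ om != c)
  s (L : 'M[k]_(s.+1, n)) :
  F + linform e ^+ d = \sum_(j < s.+1) linform (row j L) ^+ d -> waring_decomp d F s.
Proof.
move=> hG.
set c := (row 0 L *m u^T) 0 0.
have [om [hom hc]] := hroot c.
have [w hw] : exists w, (om - c) *: w = row 0 L - c *: e.
  by exists ((om - c)^-1 *: (row 0 L - c *: e)); rewrite scalerA mulfV ?scale1r // subr_eq0.
have h0 : row 0 L *m Tm w = om *: w.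
  have -> : om *: w = (om - c) *: w + c *: w by rewrite -scalerDl subrK.
  by rewrite hw mulT -/c scalerBr addrCA addrC.
move: (congr1 (comp_mpoly (subst (Tm w))) hG).
rewrite rmorphD rmorphXn /= hFfix linform_subst mulTe raddf_sum /=.
rewrite big_ord_recl /= rmorphXn /= linform_subst h0 linformZ exprZn hom scale1r.
rewrite [F + _]addrC => /addrI ->.
exists (rowsub (lift ord0) L *m Tm w); apply: eq_bigr => j _.
by rewrite rmorphXn /= linform_subst row_mul row_rowsub.
Qed.

End Main.

Lemma exists_min (P : nat -> Prop) N : P N -> exists r, P r /\ forall r', P r' -> (r <= r')%N.
Proof.
elim/ltn_ind: N => N IH HN.
case: (classic (exists r', P r' /\ (r' < N)%N)) => [[r' [Hr' Hlt]]|H].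
  exact: IH r' Hlt Hr'.
exists N; split => // r' Hr'; rewrite leqNgt; apply/negP => Hlt; by apply: H; exists r'.
Qed.

Lemma hroot (k : closedFieldType) (hchar : [pchar k] =i pred0) d (hd : (2 <= d)%N) (c : k) :
  exists om, om ^+ d = 1 /\ om != c.
Proof.
case: (eqVneq c 1) => [->|hc1]; last by exists 1; rewrite expr1n eq_sym.
case: d hd => [|[|d']] // _.
have [x hx] := @solve_monicpoly k d'.+1 (fun _ => -1) isT.
have hs : \sum_(i < d'.+2) x ^+ i = 0.
  rewrite big_ord_recr /= hx.
  have -> : \sum_(i < d'.+1) -1 * x ^+ i = - \sum_(i < d'.+1) x ^+ i.
    by rewrite -sumrN; apply: eq_bigr => i _; rewrite mulN1r.
  by rewrite addrN.
exists x; split; first by apply/eqP; rewrite -subr_eq0 subrX1 hs mulr0.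
apply/eqP => hx1; move: hs; rewrite hx1.
rewrite (eq_bigr (fun _ => 1)) ?sumr_const ?card_ord; last by move=> i _; rewrite expr1n.
move/eqP; rewrite -/(_%:R) (proj1 (pcharf0P k) hchar).
done.
Qed.

Theorem lemma4p8 (k : closedFieldType) (hchar : [pchar k] =i pred0)
  (n d : nat) (hd : (2 <= d)%N) (F : {mpoly k[n]})
  (hF : F \is d.-homog) (hF0 : F != 0)
  (m : nat) (hrk : is_waring_rank d F m)
  (hmax : forall (G : {mpoly k[n]}) (r : nat),
      G \is d.-homog -> is_waring_rank d G r -> (r <= m)%N) :
  concise d F.
Proof.
move=> r A hrA [P [hP hFP]].
have [u hu0 huA] : exists2 u : 'rV[k]_n, u != 0 & A *m u^T = 0.
  set K := kermx A^T.
  have [i hi] : exists i, row i K != 0.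
    case: (pickP (fun i => row i K != 0)) => [i hi|h]; first by exists i.
    have K0 : K = 0.
      by apply/row_matrixP => i; move: (h i) => /negbFE/eqP ->; rewrite row0.
    move: (mxrank_ker A^T); rewrite -/K K0 mxrank0 mxrank_tr => /eqP.
    by rewrite eq_sym subn_eq0 leqNgt hrA.
  exists (row i K) => //.
  have : (row i K *m A^T)^T = 0 by rewrite -row_mul mulmx_ker row0 trmx0.
  by rewrite trmx_mul trmxK.
have [i0 hi0] : exists i0, u 0 i0 != 0.
  case: (pickP (fun i0 => u 0 i0 != 0)) => [i0 hi0|h]; first by exists i0.
  move: hu0; case/negP; apply/eqP/rowP => j.
  by move: (h j) => /negbFE/eqP ->; rewrite mxE.
set e := (u 0 i0)^-1 *: (delta_mx 0 i0 : 'rV[k]_n).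
have he : (e *m u^T) 0 0 = 1.
  by rewrite /e -scalemxAl mxE -(rowE i0 u^T) !mxE mulVf.
have hFfix : forall w, F \mPo subst (Tm u e w) = F.
  move=> w; rewrite hFP comp_comp; congr (P \mPo _); apply: eq_from_tnth => j.
  rewrite !tnth_mktuple linform_subst mulT -row_mul huA.
  by rewrite row0 mxE scale0r addr0.
set G := F + linform e ^+ d.
have hGh : G \is d.-homog by apply: dhomogD => //; apply: linform_homogX.
have hGd : waring_decomp d G m.+1.
  case: hrk => [[L hL] _].
  exists (\matrix_(j < m.+1, c < n) (if unlift ord0 j is Some j' then L j' c else e 0 c)).
  rewrite big_ord_recl /G hL addrC; congr (_ + _).
    by congr (linform _ ^+ _); apply/rowP => c; rewrite !mxE unlift_none.
  apply: eq_bigr => j _; congr (linform _ ^+ _); apply/rowP => c.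
  by rewrite !mxE liftK.
have [s [hs hsmin]] := exists_min hGd.
have hsm := hmax G s hGh (conj hs hsmin).
case: s hs hsmin hsm => [|s] hs _ hsm.
  case: hs => L hL; move: hF0; rewrite (reduce0 he hFfix _ hL) ?eqxx //.
  by apply: leq_trans hd.
case: hs => L hL.
have := proj2 hrk s (reduce he hFfix (hroot hchar hd) hL).
by rewrite leqNgt hsm.
Qed.
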